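(* Let $I$ and $J$ be finite sets, let $g\in\mathbb{R}^J$, and for each $i\in I$ let $x^0_i\in\mathbb{R}^J$ and let $u_i:\mathbb{R}^J\to\mathbb{R}\cup\{-\infty\}$ be upper semicontinuous and concave with $u_i(x_i+rg)>u_i(x_i)$ for all $x_i\in\mathrm{dom}\,u_i$ and all $r>0$. Assume moreover that whenever $x\in\mathbb{R}^{I\times J}$ satisfies $u_i^\infty(x_i)\ge 0$ for all $i\in I$ and $\sum_{i\in I}x_i=0$, then $x=0$. Define $D_i(x_i):=\sup\{r\in\mathbb{R}\mid u_i(x^0_i+x_i-rg)\ge u_i(x^0_i)\}$. Then the problem \[ \text{maximize } \sum_{i\in I}D_i(x_i)\ \text{ over } x\in\mathbb{R}^{I\times J}\ \text{ subject to } \sum_{i\in I}x_i=0 \] admits an optimal solution.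
   Context: $\mathrm{dom}\,u_i=\{x\in\mathbb{R}^J\mid u_i(x)>-\infty\}$. The recession function of the upper semicontinuous concave function $u_i$ is $u_i^\infty(x_i):=\inf_{\alpha>0}\frac{u_i(\bar x_i+\alpha x_i)-u_i(\bar x_i)}{\alpha}$ for any $\bar x_i\in\mathrm{dom}\,u_i$ (independent of the choice of $\bar x_i$). $x^0_i$ is agent $i$'s endowment, $g$ the numeraire portfolio, and $D_i$ agent $i$'s indifference-price function; the optimization problem is the (double auction) market clearing problem. *)

(* Defs.v *)
(* R^J is 'rV[R]_n (J = 'I_n). *)
From HB Require Import structures.
From mathcomp Require Import all_boot all_order all_algebra.
From mathcomp Require Import all_classical all_reals all_analysis.
Set Implicit Arguments. Unset Strict Implicit. Unset Printing Implicit Defensive.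
Import Order.TTheory GRing.Theory Num.Theory.
Import numFieldNormedType.Exports.
Local Open Scope classical_set_scope.
Local Open Scope ring_scope.
Local Open Scope ereal_scope.

Section Defs.
Context {R : realType} {n : nat}.
Implicit Types (u : 'rV[R]_n -> \bar R).

Definition usc u := lower_semicontinuous (fun x => - u x).

Definition concave_ext u := forall (x y : 'rV[R]_n) (a : R), (0 < a < 1)%R ->
  a%:E * u x + (1 - a)%R%:E * u y <= u (a *: x + (1 - a) *: y)%R.

Definition dom u := [set x | u x > -oo].

Definition recession u (x : 'rV[R]_n) : \bar R :=
  let xb := xget (0 : 'rV[R]_n)%R (dom u) in
  ereal_inf [set (u (xb + a *: x)%R - u xb) * (a^-1)%:E | a in [set a : R | (0 < a)%R]].

Definition indiff_price u (x0 g x : 'rV[R]_n) : \bar R :=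
  ereal_sup [set r%:E | r in [set r : R | u x0 <= u (x0 + x - r *: g)%R]].
End Defs.

(* Main.v *)
From HB Require Import structures.
From mathcomp Require Import all_boot all_order all_algebra.
From mathcomp Require Import all_classical all_reals all_analysis.
From mathcomp Require Import ring lra.
Import Order.TTheory GRing.Theory Num.Theory.
Import numFieldNormedType.Exports.
Local Open Scope classical_set_scope.
Local Open Scope ring_scope.
Require Import Defs.
Lemma choose_lambda (R : realType) (e K p c b : R) : 0 < e -> 0 <= K -> b < p ->
  exists l, [/\ 0 < l, l < 1, l * K < e & l * (p - c) < p - b].
Proof.
move=> e0 K0 bp.
have hK : 0 < K + 1 by rewrite ltr_wpDl.
have hM : 0 < `|p - c| + 1 by rewrite ltr_wpDl.
have hpb : 0 < p - b by rewrite subr_gt0.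
set b1 := e / (K + 1) / 2. set b2 := (p - b) / (`|p - c| + 1) / 2.
have b10 : 0 < b1 by rewrite /b1 !divr_gt0.
have b20 : 0 < b2 by rewrite /b2 !divr_gt0.
exists (Num.min (1/2) (Num.min b1 b2)).
have := le_refl (Num.min (1/2 : R) (Num.min b1 b2)).
rewrite le_min le_min => /and3P[l1 l2 l3].
set l := Num.min _ _ in l1 l2 l3 *.
have l0 : 0 < l by rewrite /l !lt_min b10 b20 divr_gt0.
have e1 : l * (K + 1) <= e / 2.
  by rewrite -ler_pdivlMr // mulrAC; exact: l2.
have e2 : l * (`|p - c| + 1) <= (p - b) / 2.
  by rewrite -ler_pdivlMr // mulrAC; exact: l3.
have e3 : p - c <= `|p - c| := ler_norm _.
split => //; first by lra.
  by nra.
nra.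
Qed.

Section Agent.
Context (R : realType) (n : nat) (g x0 : 'rV[R]_n) (u : 'rV[R]_n -> \bar R).
Context (hfin : forall x, (u x < +oo)%E) (husc : usc u) (hconc : concave_ext u)
  (hmono : forall (xi : 'rV[R]_n) (r : R), dom u xi -> 0 < r -> (u xi < u (xi + r *: g))%E)
  (hdom : (-oo < u x0)%E).

Definition Aset := [set z | (u x0 <= u (x0 + z))%E].

Let c := fine (u x0).
Lemma ucE : u x0 = c%:E.
Proof. by rewrite /c fineK // fin_numE -ltey -ltNye hdom hfin. Qed.

Lemma A_closed : closed Aset.
Proof.
have -> : Aset = (fun z => x0 + z) @^-1` (~` [set x | ((- c)%:E < - u x)%E]).
  apply/seteqP; split => z; rewrite /Aset /= ucE.
    by move=> h; rewrite EFinN lteN2; apply/negP; rewrite -leNgt.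
  by rewrite EFinN lteN2 => /negP; rewrite -leNgt.
apply: (proj1 (continuous_closedP _)).
  by move=> z; exact: (@cvgD _ _ _ (nbhs z) (nbhs_filter z) (fun=> x0) id x0 z (cvg_cst _) cvg_id).
apply: open_closedC; exact: (proj1 (lower_semicontinuousP _) husc).
Qed.

Lemma A0 : Aset 0.
Proof. by rewrite /Aset /= addr0. Qed.

Lemma A_scale z a : Aset z -> 0 <= a <= 1 -> Aset (a *: z).
Proof.
move=> hz /andP[a0 a1].
have [->|an0] := eqVneq a 0; first by rewrite scale0r; exact: A0.
have [->|an1] := eqVneq a 1; first by rewrite scale1r.
have ha : (0 < a < 1)%R by rewrite lt_neqAle eq_sym an0 a0 lt_neqAle an1 a1.
have := hconc (x0 + z) x0 a ha.
have -> : (a *: (x0 + z) + (1 - a) *: x0 = x0 + a *: z)%R.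
  by rewrite scalerDr scalerBl scale1r addrAC [a *: x0 + _]addrC subrK.
apply: le_trans.
rewrite /Aset /= ucE in hz *.
apply: (@le_trans _ _ (a%:E * c%:E + (1 - a)%:E * c%:E)%E).
  by rewrite -!EFinM -EFinD lee_fin -mulrDl addrC subrK mul1r.
have ha0 : (0 < a)%R by case/andP: ha.
have ha1 : (0 < 1 - a)%R by case/andP: ha => _; rewrite subr_gt0.
apply: leeD; first by rewrite lee_pmul2l.
by rewrite lee_pmul2l.
Qed.

Lemma A_mono z t : Aset z -> 0 <= t -> Aset (z + t *: g).
Proof.
rewrite /Aset /= => hz; rewrite le_eqVlt => /orP[/eqP<-|t0].
  by rewrite scale0r addr0.
apply: (le_trans hz); rewrite addrA; apply: ltW; apply: hmono => //.
by rewrite /dom /=; exact: lt_le_trans hdom hz.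
Qed.

Lemma A_neg t : 0 < t -> ~ Aset (- (t *: g)).
Proof.
rewrite /Aset /= => t0 h.
have hd : dom u (x0 - t *: g) by rewrite /dom /=; exact: lt_le_trans hdom h.
have := hmono _ _ hd t0.
by rewrite subrK => /(le_lt_trans h); rewrite ltxx.
Qed.

Lemma A_rec d : (forall t, 0 <= t -> Aset (t *: d)) -> (0 <= recession u d)%E.
Proof.
move=> hd; rewrite /recession /=.
set xb := xget 0 (dom u).
have xbd : dom u xb by apply: xgetPex; exists x0.
have xbf : u xb = (fine (u xb))%:E.
  by rewrite fineK // fin_numE -ltey -ltNye xbd hfin.
set p := fine (u xb) in xbf.
apply: le_ereal_inf_tmp => _ [a a0 <-].
have a0' : (0 < a)%R := a0.
apply: mule_ge0; last by rewrite lee_fin invr_ge0 ltW.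
rewrite sube_ge0; last by rewrite xbf.
rewrite xbf leNgt; apply/negP => hlt.
have [b [hb1 hb2]] : exists b : R, (u (xb + a *: d) < b%:E)%E /\ b < p.
  move: hlt; case: (u (xb + a *: d)) => [q| |].
  - rewrite lte_fin => qp; exists ((q + p) / 2); rewrite lte_fin; split; lra.
  - by rewrite ltNge leey.
  - by move=> _; exists (p - 1); rewrite ltNye; split => //; lra.
have hnb : ((- b)%:E < - u (xb + a *: d))%E by rewrite EFinN lteN2.
have [V Vn HV] := husc _ _ hnb.
have [e /= e0 eV] := proj1 (nbhs_ballP _ _) Vn.
have [l [l0 l1 lK lp]] := @choose_lambda _ e _ p c b e0 (normr_ge0 (x0 - xb)) hb2.
have hl : (0 < l < 1)%R by rewrite l0 l1.
have := hconc (x0 + (a / l) *: d) xb l hl.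
have -> : (l *: (x0 + (a / l) *: d) + (1 - l) *: xb = xb + a *: d + l *: (x0 - xb))%R.
  rewrite scalerDr scalerA mulrCA divff ?gt_eqF // mulr1 scalerBl scale1r scalerBr.
  by rewrite !addrA; congr (_ + _); rewrite addrC addrA addrAC.
have hw : V (xb + a *: d + l *: (x0 - xb))%R.
  apply: eV; rewrite -ball_normE /ball_ /= opprD addrA subrr sub0r normrN normrZ.
  by rewrite gtr0_norm //.
have := HV _ hw; rewrite EFinN lteN2 => hwb hc.
have := hd (a / l) (ltW (divr_gt0 a0' l0)); rewrite /Aset /= ucE => hcd.
have : ((l * c + (1 - l) * p)%:E <= u (xb + a *: d + l *: (x0 - xb)))%E.
  apply: le_trans hc; rewrite EFinD !EFinM xbf; apply: leeD => //.
  by rewrite lee_pmul2l // lte_fin.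
move=> /(le_lt_trans)/(_ hwb); rewrite lte_fin.
lra.
Qed.
End Agent.
Section Enc.
Context (R : realType) (I : finType) (n : nat).
Local Notation WW := 'rV[R]_(1 + #|I| * n).
Definition sc (w : WW) : R := w ord0 (lshift _ ord0).
Definition comp (w : WW) (i : I) : 'rV[R]_n :=
  \row_j w ord0 (rshift 1 (mxvec_index (enum_rank i) j)).
Definition pack (z : I -> 'rV[R]_n) (s : R) : WW :=
  row_mx (s%:M) (mxvec (\matrix_(k, j) z (enum_val k) ord0 j)).

Lemma comp_pack z s i : comp (pack z s) i = z i.
Proof.
apply/rowP => j; rewrite mxE row_mxEr mxvecE mxE enum_rankK.
by congr (z i _ _); apply: val_inj; case: ord0.
Qed.

Lemma sc_pack z s : sc (pack z s) = s.
Proof. by rewrite /sc /pack row_mxEl mxE eqxx mulr1n. Qed.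

Lemma compD (w w' : WW) i : comp (w + w') i = comp w i + comp w' i.
Proof. by apply/rowP => j; rewrite !mxE. Qed.
Lemma compZ a (w : WW) i : comp (a *: w) i = a *: comp w i.
Proof. by apply/rowP => j; rewrite !mxE. Qed.
Lemma comp0 i : comp 0 i = 0.
Proof. by apply/rowP => j; rewrite !mxE. Qed.
Lemma scD (w w' : WW) : sc (w + w') = sc w + sc w'.
Proof. by rewrite /sc !mxE. Qed.
Lemma scZ a (w : WW) : sc (a *: w) = a * sc w.
Proof. by rewrite /sc !mxE. Qed.
Lemma sc0 : sc 0 = 0.
Proof. by rewrite /sc !mxE. Qed.

Lemma comp_sc_eq0 (w : WW) : (forall i, comp w i = 0) -> sc w = 0 -> w = 0.
Proof.
move=> hc hs; apply/rowP => k; rewrite mxE.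
case: (splitP k) => [k' /= ek| k' ek].
  have -> : k = lshift _ ord0 by apply: val_inj; rewrite /= ek; case: k' {ek} => [[]].
  exact: hs.
move: ek; case: (mxvec_indexP k') => a j ek.
have := congr1 (fun v : 'rV[R]_n => v ord0 j) (hc (enum_val a)).
rewrite !mxE enum_valK => <-; congr (w _ _); apply: val_inj => //=.
Qed.
Lemma comp_cont i : continuous (fun w : WW => comp w i).
Proof.
move=> w; apply/(cvg_ballP (FF := nbhs_filter w)) => e e0; apply/nbhs_ballP; exists e => //= w' [_ H].
split => // a j; rewrite !mxE; exact: H.
Qed.

Lemma sc_cont : continuous sc.
Proof.
move=> w; apply/(cvg_ballP (FF := nbhs_filter w)) => e e0; apply/nbhs_ballP; exists e => //= w' [_ H].
exact: H.
Qed.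
End Enc.
Lemma sum_sup_le_seq (R : realType) (T : eqType) (s : seq T) (S : T -> set R) (c : R) :
  uniq s ->
  (forall f : T -> R, (forall i, i \in s -> S i (f i)) -> \sum_(i <- s) f i <= c) ->
  (\sum_(i <- s) ereal_sup [set r%:E | r in S i] <= c%:E)%E.
Proof.
elim: s c => [|a s IH] c.
  move=> _ h; rewrite big_nil lee_fin; have := h (fun=> 0) (fun i (hi : i \in [::]) => ltac:(by [])).
  by rewrite big_nil.
rewrite cons_uniq => /andP[an us] h; rewrite big_cons.
case: (pselect (exists r, S a r)) => [[r0 Sr0]|nS]; last first.
  rewrite (_ : [set r%:E | r in S a] = set0) ?ereal_sup0 ?addNye ?leNye //.
  by apply/seteqP; split => // x [r Sr _]; exfalso; exact: nS (ex_intro _ r Sr).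
have hr : forall r, S a r -> (\sum_(i <- s) ereal_sup [set r%:E | r in S i] <= (c - r)%:E)%E.
  move=> r Sr; apply: IH => // f hf.
  have := h (fun i => if i == a then r else f i).
  rewrite big_cons eqxx.
  rewrite (eq_big_seq f); last first.
    by move=> i iS; case: eqP => // ei; move: an; rewrite -ei iS.
  move=> H; have : r + \sum_(i <- s) f i <= c.
    apply: H => i; rewrite inE; case: eqP => [-> _|_ /= ]; [exact: Sr| exact: hf].
  lra.
move: (hr r0 Sr0); case: (\sum_(i <- s) _)%E (hr) => [x| |] hr' h0.
- have : (ereal_sup [set r%:E | r in S a] <= (c - x)%:E)%E.
    apply: ge_ereal_sup => _ [r Sr <-]; have := hr' r Sr; rewrite !lee_fin; lra.
  case: (ereal_sup _) => [y| |]; rewrite ?lee_fin ?leey //=.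
  + by move=> ?; lra.
  + by move=> _; rewrite addNye leNye.
- by move: h0; rewrite leNgt ltey.
- by rewrite addeNy leNye.
Qed.

Lemma sum_sup_le (R : realType) (I : finType) (S : I -> set R) (c : R) :
  (forall f : I -> R, (forall i, S i (f i)) -> \sum_i f i <= c) ->
  (\sum_i ereal_sup [set r%:E | r in S i] <= c%:E)%E.
Proof.
move=> h; apply: sum_sup_le_seq; first exact: index_enum_uniq.
by move=> f hf; apply: h => i; apply: hf; rewrite mem_index_enum.
Qed.
Lemma cont_sum (R : realType) (T : topologicalType) (V : normedModType R) (J : Type)
  (s : seq J) (f : J -> T -> V) :
  (forall j, continuous (f j)) -> continuous (fun x => \sum_(j <- s) f j x).
Proof.
move=> hf; elim: s => [|a s IH].
  under eq_fun do rewrite big_nil; exact: cst_continuous.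
under eq_fun do rewrite big_cons.
move=> x; apply: continuousD; [exact: hf | exact: IH].
Qed.

Lemma bb (R : realType) k (F : set 'rV[R]_k) M : (forall w, F w -> `|w| <= M) -> bounded_set F.
Proof.
move=> h; exists M; split; first by rewrite num_real.
move=> M' hM' w Fw; exact: le_trans (h w Fw) (ltW hM').
Qed.

Section Main.
Context (R : realType) (I : finType) (n : nat) (g : 'rV[R]_n) (x0 : I -> 'rV[R]_n)
  (u : I -> 'rV[R]_n -> \bar R).
Context (hfin : forall i x, (u i x < +oo)%E) (husc : forall i, usc (u i))
  (hconc : forall i, concave_ext (u i))
  (hmono : forall i (xi : 'rV[R]_n) (r : R), dom (u i) xi -> 0 < r ->
     (u i xi < u i (xi + r *: g)%R)%E)
  (hrec : forall x : I -> 'rV[R]_n, (forall i, (0 <= recession (u i) (x i))%E) ->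
     \sum_(i : I) x i = 0 -> forall i, x i = 0)
  (hdom : forall i, (-oo < u i (x0 i))%E) (i1 : I).

Local Notation A i := (Aset R n (x0 i) (u i)).
Local Notation W := 'rV[R]_(1 + #|I| * n).
Local Notation cp := (comp R I n).
Local Notation sw := (sc R I n).

Definition Fset : set W :=
  [set w | (forall i, A i (cp w i)) /\ 0 <= sw w /\ \sum_i cp w i + sw w *: g = 0].

Lemma lin_cont : continuous (fun w : W => \sum_i cp w i + sw w *: g).
Proof.
move=> w; apply: (@continuousD _ _ _ (fun w : W => \sum_i cp w i) (fun w => sw w *: g)).
  exact: (@cont_sum R _ _ _ _ (fun i w => cp w i) (fun i => comp_cont R I n i)).
by apply: continuousZr_tmp; exact: sc_cont.
Qed.

Lemma cone_closed : closed [set w : W | 0 <= sw w /\ \sum_i cp w i + sw w *: g = 0].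
Proof.
apply: closedI.
  exact: (proj1 (continuous_closedP _) (sc_cont R I n) [set x | 0 <= x] (@closed_ge _ 0)).
have := (proj1 (continuous_closedP _) lin_cont [set 0]).
apply => //.
apply: accessible_closed_set1; apply: hausdorff_accessible; exact: norm_hausdorff.
Qed.

Lemma Fclosed : closed Fset.
Proof.
have -> : Fset = (\bigcap_(i in setT) ((fun w => cp w i) @^-1` A i)) `&`
    [set w : W | 0 <= sw w /\ \sum_i cp w i + sw w *: g = 0].
  apply/seteqP; split => w /= [h1 h2]; split => //.
    by move=> i _; exact: h1.
  by move=> i; exact: h1.
apply: closedI; last exact: cone_closed.
apply: closed_bigI => i _.
have := (proj1 (continuous_closedP _) (comp_cont R I n i) (A i)).
apply; exact: (A_closed _ _ _ _ (hfin i) (husc i) (hdom i)).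
Qed.

Lemma cluster_closed (T : topologicalType) (F : set_system T) (d : T) (B : set T) :
  cluster F d -> closed B -> F B -> B d.
Proof.
move=> cd cB FB; rewrite clusterE in cd.
have -> : B = closure B by apply/closure_id.
exact: cd FB.
Qed.

Lemma Fbounded : exists M, forall w, Fset w -> `|w| <= M.
Proof.
case: (pselect (exists M, forall w, Fset w -> `|w| <= M)) => // hnb; exfalso.
have : forall k : nat, exists w, Fset w /\ (k%:R < `|w|).
  move=> k; apply: contrapT => hk; apply: hnb; exists k%:R => w Fw.
  rewrite leNgt; apply/negP => hlt; apply: hk; exists w; exact: (conj Fw hlt).
move=> /choice [ws hws].
have wpos k : 0 < `|ws k| by apply: le_lt_trans (proj2 (hws k)).
pose v k := `|ws k|^-1 *: ws k.
have vn k : `|v k| = 1.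
  by rewrite /v normrZ normfV normr_id mulVf // gt_eqF.
pose S := [set w : W | `|w| = 1].
have cS : compact S.
  apply: bounded_closed_compact.
    by apply: (@bb _ _ _ 1) => w ->.
  have := (proj1 (continuous_closedP _) (@norm_continuous _ W) [set 1]).
  apply; exact: closed_eq.
have [d [Sd cd]] : S `&` cluster (v @ \oo) !=set0.
  by apply: cS; exists 0%N => // k _; exact: vn.
have hA : forall i t, 0 <= t -> A i (t *: cp d i).
  move=> i t t0.
  pose N := Num.Def.archi_bound t.
  have hN : t < N%:R := archi_boundP t0.
  apply: (@cluster_closed _ _ d [set w | A i (t *: cp w i)] cd).
    have := (proj1 (continuous_closedP (fun w : W => t *: cp w i)) _ (A i)).
    apply; last exact: (A_closed _ _ _ _ (hfin i) (husc i) (hdom i)).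
    by move=> w; apply: continuousZl_tmp; exact: comp_cont.
  exists N => // k /= hk.
  rewrite /v compZ scalerA.
  apply: (A_scale _ _ _ _ (hfin i) (hconc i) (hdom i)); first exact: (proj1 (proj1 (hws k)) i).
  have hk' : t < `|ws k|.
    apply: lt_trans hN _; apply: le_lt_trans (proj2 (hws k)); by rewrite ler_nat.
  by rewrite divr_ge0 //= ler_pdivrMr // mul1r ltW.
have hC : 0 <= sw d /\ \sum_i cp d i + sw d *: g = 0.
  apply: (@cluster_closed _ _ d _ cd cone_closed); exists 0%N => // k _.
  have [_ [s0 hs]] := proj1 (hws k).
  rewrite /v /= scZ; split; first by rewrite mulr_ge0 // invr_ge0.
  under eq_bigr do rewrite compZ.
  by rewrite -scaler_sumr -scalerA -scalerDr hs scaler0.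
pose d' i := cp d i + (if i == i1 then sw d *: g else 0).
have hd' : forall i, d' i = 0.
  apply: hrec.
    move=> i; apply: (A_rec _ _ _ _ (hfin i) (husc i) (hconc i) (hdom i)) => t t0.
    rewrite /d' scalerDr; case: eqP => _; last by rewrite scaler0 addr0; exact: hA.
    rewrite scalerA; apply: (A_mono _ _ _ _ _ (hmono i) (hdom i)); first exact: hA.
    exact: mulr_ge0 t0 (proj1 hC).
  have e : \sum_i (if i == i1 then sw d *: g else 0) = sw d *: g.
    by rewrite (bigD1 i1) //= eqxx big1 ?addr0 // => j /negbTE ->.
  rewrite big_split /= e; exact: (proj2 hC).
have sd0 : sw d = 0.
  apply/eqP; rewrite eq_le (proj1 hC) andbT leNgt; apply/negP => sp.
  have := hA i1 1 ler01; rewrite scale1r.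
  have -> : cp d i1 = - (sw d *: g).
    by have := hd' i1; rewrite /d' eqxx => /eqP; rewrite addr_eq0 => /eqP.
  exact: (A_neg _ _ _ _ _ (hmono i1) (hdom i1) _ sp).
have d0 : d = 0.
  apply: comp_sc_eq0 => // i; have := hd' i; rewrite /d' sd0 scale0r.
  by case: eqP => _; rewrite addr0.
by move: Sd; rewrite /S /= d0 normr0 => /eqP; rewrite eq_sym oner_eq0.
Qed.

Lemma main_case : exists x : I -> 'rV[R]_n, \sum_(i : I) x i = 0 /\
    forall y : I -> 'rV[R]_n, \sum_(i : I) y i = 0 ->
      (\sum_(i : I) indiff_price (u i) (x0 i) g (y i) <=
       \sum_(i : I) indiff_price (u i) (x0 i) g (x i))%E.
Proof.
have [M hM] := Fbounded.
have cF : compact Fset := bounded_closed_compact (@bb _ _ _ _ hM) Fclosed.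
have F0 : Fset 0.
  split; first by move=> i; rewrite comp0; exact: A0.
  rewrite sc0 lexx; split => //.
  by rewrite big1 ?scale0r ?addr0 // => i _; rewrite comp0.
have [ws Fws hmax] := EVT_max_rV (ex_intro _ 0 F0) cF (@continuous_subspaceT _ _ Fset _ (sc_cont R I n)).
rewrite inE in Fws.
set s := sw ws.
have e : forall (V : zmodType) (a : V), \sum_(i : I) (if i == i1 then a else 0) = a.
  by move=> V a; rewrite (bigD1 i1) //= eqxx big1 ?addr0 // => j /negbTE ->.
exists (fun i => cp ws i + (if i == i1 then s *: g else 0)).
split.
  rewrite big_split /= e; exact: (proj2 (proj2 Fws)).
move=> y hy.
apply: (@le_trans _ _ s%:E).
  apply: sum_sup_le => f hf.
  case: (leP 0 (\sum_i f i)) => hs; last first.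
    by apply: ltW; apply: lt_le_trans hs (proj1 (proj2 Fws)).
  pose w := pack R I n (fun i => y i - f i *: g) (\sum_i f i).
  have Fw : Fset w.
    split; [move=> i | split]; rewrite ?comp_pack ?sc_pack //.
      by rewrite /Aset /= addrA; exact: hf i.
    under eq_bigr do rewrite comp_pack.
    by rewrite sumrB hy sub0r -scaler_suml addNr.
  by have := hmax w (mem_set Fw); rewrite sc_pack.
rewrite -[X in X%:E](e R) -sumEFin; apply: lee_sum => i _.
apply: ereal_sup_ubound; exists (if i == i1 then s else 0) => //=.
case: eqP => _.
  by rewrite addrA addrK; exact: (proj1 Fws i).
by rewrite addr0 scale0r subr0; exact: (proj1 Fws i).
Qed.
End Main.

Theorem theorem4p3 (R : realType) (I : finType) (n : nat)
  (g : 'rV[R]_n) (x0 : I -> 'rV[R]_n) (u : I -> 'rV[R]_n -> \bar R) :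
  (forall i x, (u i x < +oo)%E) ->
  (forall i, usc (u i)) ->
  (forall i, concave_ext (u i)) ->
  (forall i (xi : 'rV[R]_n) (r : R), dom (u i) xi -> 0 < r ->
     (u i xi < u i (xi + r *: g)%R)%E) ->
  (forall x : I -> 'rV[R]_n, (forall i, (0 <= recession (u i) (x i))%E) ->
     \sum_(i : I) x i = 0 -> forall i, x i = 0) ->
  exists x : I -> 'rV[R]_n, \sum_(i : I) x i = 0 /\
    forall y : I -> 'rV[R]_n, \sum_(i : I) y i = 0 ->
      (\sum_(i : I) indiff_price (u i) (x0 i) g (y i) <=
       \sum_(i : I) indiff_price (u i) (x0 i) g (x i))%E.
Proof.
move=> hfin husc hconc hmono hrec.
case: (pickP (@predT I)) => [i1 _|hI]; last first.
  exists (fun=> 0); split; first by rewrite big1.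
  by move=> y _; rewrite !big1 // => i; have := hI i.
case: (pselect (forall i, (-oo < u i (x0 i))%E)) => [hdom|].
  exact: (main_case _ _ _ _ _ _ hfin husc hconc hmono hrec hdom i1).
move=> /existsNP [i0 /negP]; rewrite -leNgt leeNy_eq => /eqP h0.
exists (fun=> 0); split; first by rewrite big1.
move=> y _.
have D0 : forall i, (0%R <= indiff_price (u i) (x0 i) g 0)%E.
  move=> i; apply: ereal_sup_ubound; exists 0 => //=.
  by rewrite addr0 scale0r subr0.
have Di0 : indiff_price (u i0) (x0 i0) g 0 = +oo%E.
  apply: hasNub_ereal_sup; last by exists 0; rewrite /= h0 leNye.
  move=> [M hM]; have : M + 1 <= M by apply: hM; rewrite /= h0 leNye.
  lra.
rewrite [X in (_ <= X)%E](bigD1 i0) //= Di0 addye ?leey //.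
by rewrite gt_eqF // (lt_le_trans _ (sume_ge0 _ _)) ?ltNy0 // => i _; exact: D0.
Qed.
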